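(* Let $k$ be an odd positive integer, let $D=k^2+1$ and $n=k^2$. Suppose $(a,b)$ and $(a',b')$ are two primitive solutions (i.e. $\gcd(a,b)=\gcd(a',b')=1$) of $X^2-DY^2=n$ such that $(a,b)$ is equivalent neither to $(a',b')$ nor to $(a',-b')$. Then there exist coprime integers $p,q$, both greater than $1$, with $k=pq$, such that both $p^4$ and $q^4$ are primitively represented by the form $X^2-DY^2$, i.e. there are coprime integers $u_1,v_1$ with $u_1^2-Dv_1^2=p^4$ and coprime integers $u_2,v_2$ with $u_2^2-Dv_2^2=q^4$.
   Context: Two solutions $(x,y)$ and $(x',y')$ of $X^2-DY^2=n$ are called equivalent if $xx'\equiv Dyy' \pmod{n}$ and $xy'\equiv yx'\pmod{n}$. *)

(* Defs.v *)
From Stdlib Require Import ZArith Znumtheory.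
Open Scope Z_scope.

Definition is_solution (D n x y : Z) : Prop := x * x - D * y * y = n.

Definition primitive_solution (D n x y : Z) : Prop :=
  is_solution D n x y /\ Z.gcd x y = 1.

Definition equiv_sol (D n x y x' y' : Z) : Prop :=
  (n | x * x' - D * y * y') /\ (n | x * y' - y * x').

(* Main.v *)
Require Import Defs.
From Stdlib Require Import ZArith Znumtheory Lia.
Open Scope Z_scope.

Lemma dmono (a b c d : Z) : (a | b) -> (c | d) -> (a * c | b * d).
Proof. intros [x Hx] [y Hy]. exists (x * y). subst. ring. Qed.

Lemma rp_of (x y : Z) : (forall d, (d | x) -> (d | y) -> (d | 1)) -> rel_prime x y.
Proof. intros H. constructor; auto using Z.divide_1_l. Qed.

Lemma rp_use (x y d : Z) : rel_prime x y -> (d | x) -> (d | y) -> (d | 1).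
Proof. intros [_ _ H]. auto. Qed.

Lemma dvd_gcd_prod (k X Y : Z) : 0 < k -> (k | X * Y) -> (k | Z.gcd k X * Z.gcd k Y).
Proof.
  intros Hk HXY.
  set (g := Z.gcd k X).
  assert (Hg : 0 < g).
  { unfold g. assert (0 <= Z.gcd k X) by apply Z.gcd_nonneg.
    assert (Z.gcd k X <> 0). { intro H0. apply Z.gcd_eq_0_l in H0. lia. } lia. }
  destruct (Z.gcd_divide_l k X) as [k' Hk'].
  destruct (Z.gcd_divide_r k X) as [X' HX'].
  fold g in Hk', HX'.
  assert (Hrp : rel_prime k' X').
  { apply rp_of. intros d Hd1 Hd2.
    assert (Hdg : (d * g | g)).
    { apply Z.gcd_greatest.
      - rewrite Hk'. apply Z.mul_divide_mono_r. auto.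
      - rewrite HX'. apply Z.mul_divide_mono_r. auto. }
    destruct Hdg as [e He]. exists e.
    apply Z.mul_reg_r with g; lia. }
  assert (Hk'Y : (k' | X' * Y)).
  { destruct HXY as [t Ht]. exists t.
    apply Z.mul_reg_r with g; [lia|].
    rewrite Hk', HX' in Ht. lia. }
  assert (Hy : (k' | Y)) by (apply Gauss with X'; auto).
  assert (Hy2 : (k' | Z.gcd k Y)).
  { apply Z.gcd_greatest; auto. rewrite Hk'. apply Z.divide_factor_l. }
  rewrite Hk' at 1. rewrite (Z.mul_comm k' g).
  apply Z.mul_divide_mono_l. auto.
Qed.

Lemma coprime_ka (k a b : Z) :
  a * a - (k ^ 2 + 1) * b * b = k ^ 2 -> Z.gcd a b = 1 -> rel_prime k a.
Proof.
  intros Hs Hg. apply rp_of. intros d Hdk Hda.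
  assert (HD : rel_prime d (k ^ 2 + 1)).
  { apply rp_of. intros e He1 He2.
    assert (Hek : (e | k)) by exact (Z.divide_trans _ _ _ He1 Hdk).
    replace 1 with (k ^ 2 + 1 - k * k) by ring.
    apply Z.divide_sub_r; auto. apply Z.divide_mul_l; auto. }
  assert (Hd2 : (d | (k ^ 2 + 1) * (b * b))).
  { replace ((k ^ 2 + 1) * (b * b)) with (a * a - k * k) by (rewrite Z.pow_2_r in Hs |- *; lia).
    apply Z.divide_sub_r; apply Z.divide_mul_l; auto. }
  assert (Hdb : (d | b * b)) by (apply Gauss with (k ^ 2 + 1); auto).
  apply Zgcd_1_rel_prime in Hg.
  assert (Hab : rel_prime a (b * b)) by (apply rel_prime_mult; auto).
  eapply rp_use; eauto.
Qed.

Lemma side (D k X Y X' a b c r s : Z) :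
  k = r * s -> 0 < r -> 0 < s ->
  r = Z.gcd k X -> s = Z.gcd k X' ->
  (forall d, (d | k) -> (d | X) -> (d | X') -> (d | 1)) ->
  (k * k | X * X') ->
  a * Y = b * X + k * k * c ->
  rel_prime k a ->
  X * X - D * Y * Y = k ^ 4 ->
  exists u v, X = u * (r * r) /\ Y = v * (r * r) /\ Z.gcd u v = 1 /\ u ^ 2 - D * v ^ 2 = s ^ 4.
Proof.
  intros Hk Hr Hs Hrd Hsd Hcop Hkk HY Hka HN.
  assert (Hrk : (r | k)) by (rewrite Hrd; apply Z.gcd_divide_l).
  assert (HrX : (r | X)) by (rewrite Hrd; apply Z.gcd_divide_r).
  assert (Hsk : (s | k)) by (rewrite Hsd; apply Z.gcd_divide_l).
  assert (HsX : (s | X')) by (rewrite Hsd; apply Z.gcd_divide_r).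
  assert (HrX' : rel_prime (r * r) X').
  { apply rel_prime_sym. apply rel_prime_mult; apply rel_prime_sym; apply rp_of;
    intros d H1 H2; apply Hcop; eauto using Z.divide_trans. }
  assert (Hr2X : (r * r | X)).
  { apply Gauss with X'; auto. rewrite (Z.mul_comm X' X). eapply Z.divide_trans; [|exact Hkk].
    apply dmono; auto. }
  assert (Hra : rel_prime (r * r) a).
  { apply rel_prime_sym. apply rel_prime_mult; apply rel_prime_sym; apply rp_of;
    intros d H1 H2; exact (rp_use _ _ _ Hka (Z.divide_trans _ _ _ H1 Hrk) H2). }
  assert (Hr2Y : (r * r | Y)).
  { apply Gauss with a; auto. rewrite HY. apply Z.divide_add_r.
    - apply Z.divide_mul_r; auto.
    - apply Z.divide_mul_l. apply dmono; auto. }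
  destruct Hr2X as [u Hu]. destruct Hr2Y as [v Hv].
  exists u, v. split; [auto|]. split; [auto|].
  assert (HN' : u ^ 2 - D * v ^ 2 = s ^ 4).
  { apply Z.mul_reg_l with (r ^ 4). { apply Z.pow_nonzero; lia. }
    rewrite Hu, Hv, Hk in HN. rewrite <- Z.pow_mul_l.
    rewrite <- HN. ring. }
  split; [|auto].
  apply Zgcd_1_rel_prime. apply rp_of. intros d Hdu Hdv.
  assert (Hus : rel_prime u s).
  { apply rp_of. intros e H1 H2. apply Hcop.
    - eapply Z.divide_trans; eauto.
    - rewrite Hu. apply Z.divide_mul_l; auto.
    - eapply Z.divide_trans; eauto. }
  assert (Hus4 : rel_prime u (s ^ 4)).
  { replace (s ^ 4) with (s * (s * (s * s))) by ring.
    repeat apply rel_prime_mult; auto. }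
  eapply rp_use; [exact Hus4| exact Hdu|].
  rewrite <- HN'. apply Z.divide_sub_r.
  - rewrite Z.pow_2_r. apply Z.divide_mul_l; auto.
  - apply Z.divide_mul_r. rewrite Z.pow_2_r. apply Z.divide_mul_l; auto.
Qed.

Theorem lemma4p3 (k a b a' b' : Z) :
  0 < k -> Z.odd k = true ->
  primitive_solution (k ^ 2 + 1) (k ^ 2) a b ->
  primitive_solution (k ^ 2 + 1) (k ^ 2) a' b' ->
  ~ equiv_sol (k ^ 2 + 1) (k ^ 2) a b a' b' ->
  ~ equiv_sol (k ^ 2 + 1) (k ^ 2) a b a' (- b') ->
  exists p q : Z,
    1 < p /\ 1 < q /\ Z.gcd p q = 1 /\ k = p * q /\
    (exists u1 v1 : Z, Z.gcd u1 v1 = 1 /\ u1 ^ 2 - (k ^ 2 + 1) * v1 ^ 2 = p ^ 4) /\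
    (exists u2 v2 : Z, Z.gcd u2 v2 = 1 /\ u2 ^ 2 - (k ^ 2 + 1) * v2 ^ 2 = q ^ 4).
Proof.
  intros Hk Hodd [Hs1 Hg1] [Hs2 Hg2] Hne1 Hne2.
  unfold is_solution in Hs1, Hs2.
  set (D := k ^ 2 + 1) in *.
  set (X1 := a * a' - D * b * b').
  set (Y1 := a' * b - a * b').
  set (X2 := a * a' + D * b * b').
  set (Y2 := a * b' + a' * b).
  assert (Hka : rel_prime k a) by (apply coprime_ka with b; auto).
  assert (Hka' : rel_prime k a') by (apply coprime_ka with b'; auto).
  assert (Hk2 : rel_prime k 2).
  { apply rp_of. intros d H1 H2.
    assert (Hkk : k = 2 * Z.div2 k + 1).
    { rewrite (Z.div2_odd k) at 1. rewrite Hodd. simpl. ring. }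
    replace 1 with (k - 2 * Z.div2 k) by lia.
    apply Z.divide_sub_r; auto. apply Z.divide_mul_l; auto. }
  assert (Hcop : forall d, (d | k) -> (d | X1) -> (d | X2) -> (d | 1)).
  { intros d H1 H2 H3.
    assert (H4 : (d | 2 * a * a')).
    { replace (2 * a * a') with (X1 + X2) by (unfold X1, X2; ring).
      apply Z.divide_add_r; auto. }
    assert (Hrel : rel_prime k (2 * a * a')) by (repeat apply rel_prime_mult; auto).
    eapply rp_use; eauto. }
  assert (Hcop' : forall d, (d | k) -> (d | X2) -> (d | X1) -> (d | 1)) by (intros d H1 H2 H3; exact (Hcop d H1 H3 H2)).
  assert (HP : X1 * X2 = k * k * (k * k + D * (b * b + b' * b'))).
  { assert (HA : a * a = k * k + D * b * b) by (rewrite Z.pow_2_r in Hs1; lia).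
    assert (HA' : a' * a' = k * k + D * b' * b') by (rewrite Z.pow_2_r in Hs2; lia).
    transitivity ((a * a) * (a' * a') - D * D * (b * b) * (b' * b')).
    { unfold X1, X2; ring. }
    rewrite HA, HA'. ring. }
  assert (Hkk : (k * k | X1 * X2)) by (rewrite HP; apply Z.divide_factor_l).
  assert (Hkk' : (k * k | X2 * X1)) by (rewrite (Z.mul_comm X2 X1); auto).
  set (r := Z.gcd k X1). set (s := Z.gcd k X2).
  assert (Hr0 : 0 <= r) by apply Z.gcd_nonneg.
  assert (Hs0 : 0 <= s) by apply Z.gcd_nonneg.
  assert (Hrs : Z.gcd r s = 1).
  { apply Zgcd_1_rel_prime, rp_of. intros d H1 H2.
    apply Hcop.
    - eapply Z.divide_trans; [exact H1|apply Z.gcd_divide_l].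
    - eapply Z.divide_trans; [exact H1|apply Z.gcd_divide_r].
    - eapply Z.divide_trans; [exact H2|apply Z.gcd_divide_r]. }
  assert (Hkrs : k = r * s).
  { apply Z.divide_antisym_nonneg; [lia|lia| |].
    - apply dvd_gcd_prod; auto. eapply Z.divide_trans; [|exact Hkk].
      apply Z.divide_factor_l.
    - destruct (Z.gcd_divide_l k X1) as [t Ht]. fold r in Ht.
      assert (Hst : (s | t)).
      { apply Gauss with r.
        - rewrite Z.mul_comm, <- Ht. apply Z.gcd_divide_l.
        - apply Zgcd_1_rel_prime. rewrite Z.gcd_comm. auto. }
      rewrite Ht, (Z.mul_comm r s). apply Z.mul_divide_mono_r. auto. }
  assert (Hrp : 0 < r).
  { destruct (Z.eq_dec r 0) as [E|E]; [rewrite E in Hkrs; lia | lia]. }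
  assert (Hsp : 0 < s).
  { destruct (Z.eq_dec s 0) as [E|E]; [rewrite E in Hkrs; lia | lia]. }
  assert (HN1 : X1 * X1 - D * Y1 * Y1 = k ^ 4).
  { transitivity ((a * a - D * b * b) * (a' * a' - D * b' * b')).
    { unfold X1, Y1; ring. } rewrite Hs1, Hs2. ring. }
  assert (HN2 : X2 * X2 - D * Y2 * Y2 = k ^ 4).
  { transitivity ((a * a - D * b * b) * (a' * a' - D * b' * b')).
    { unfold X2, Y2; ring. } rewrite Hs1, Hs2. ring. }
  assert (HI1 : a * Y1 = b * X1 + k * k * (- b')).
  { transitivity (b * X1 - b' * (a * a - D * b * b)). { unfold X1, Y1; ring. }
    rewrite Hs1. ring. }
  assert (HI2 : a * Y2 = b * X2 + k * k * b').
  { transitivity (b * X2 + b' * (a * a - D * b * b)). { unfold X2, Y2; ring. }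
    rewrite Hs1. ring. }
  destruct (side D k X1 Y1 X2 a b (-b') r s Hkrs Hrp Hsp eq_refl eq_refl Hcop Hkk HI1 Hka HN1)
    as [u2 [v2 [Hu2 [Hv2 [Hg3 HN3]]]]].
  assert (Hkrs' : k = s * r) by lia.
  destruct (side D k X2 Y2 X1 a b b' s r Hkrs' Hsp Hrp eq_refl eq_refl Hcop' Hkk' HI2 Hka HN2)
    as [u1 [v1 [Hu1 [Hv1 [Hg4 HN4]]]]].
  assert (Hs1' : s <> 1).
  { intro E. apply Hne1. unfold equiv_sol. rewrite Z.pow_2_r.
    assert (Er : r = k) by lia. rewrite <- Er. split.
    - exists u2. fold D. fold X1. auto.
    - exists (- v2). replace (a * b' - b * a') with (- Y1) by (unfold Y1; ring). lia. }
  assert (Hr1' : r <> 1).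
  { intro E. apply Hne2. unfold equiv_sol. rewrite Z.pow_2_r.
    assert (Er : s = k) by lia. rewrite <- Er. split.
    - exists u1. rewrite <- Hu1. unfold X2. ring.
    - exists (- v1). replace (a * - b' - b * a') with (- Y2) by (unfold Y2; ring). lia. }
  exists r, s. split; [lia|]. split; [lia|]. split; [auto|]. split; [auto|].
  split; [exists u1, v1 | exists u2, v2]; auto.
Qed.
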